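(* For every integer $K\ge1$, $$s(4,K,2)=\begin{cases}\left\lceil\frac{2K}{3}\right\rceil & \text{if } K\equiv 0,2 \text{ or } 5 \pmod 6,\\[2pt] \left\lceil\frac{2K}{3}\right\rceil+1 & \text{otherwise.}\end{cases}$$
   Context: A placement delivery array $S$-PDA$(F,K,Z)$ is an $F\times K$ array $R=(r_{j,k})$, $1\le j\le F$, $1\le k\le K$, over a finite set $S$ such that: (1) each cell is either empty or contains an element of $S$; (2) each column contains exactly $Z$ empty cells; (3) each element of $S$ occurs at most once in each row and at most once in each column; (4) if two distinct nonempty cells satisfy $r_{j_1,k_1}=r_{j_2,k_2}=t\in S$, then the cells $r_{j_1,k_2}$ and $r_{j_2,k_1}$ are empty. For integers $F,K\ge1$, $0\le Z\le F$, define $s(F,K,Z)=\min\{|S| : \text{there exists an } S\text{-PDA}(F,K,Z)\}$. *)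

(* Defs.v *)
From mathcomp Require Import all_boot.
Set Implicit Arguments. Unset Strict Implicit. Unset Printing Implicit Defensive.

(* A placement delivery array S-PDA(F,K,Z): an F x K array over the finite set S,
   cells are [None] (empty) or [Some t] with t in S. *)
Definition is_PDA (F K Z : nat) (S : finType) (R : 'I_F -> 'I_K -> option S) : Prop :=
  (forall k : 'I_K, #|[set j : 'I_F | R j k == None]| = Z) /\
  (forall (j : 'I_F) (k1 k2 : 'I_K) (t : S),
      R j k1 = Some t -> R j k2 = Some t -> k1 = k2) /\
  (forall (j1 j2 : 'I_F) (k : 'I_K) (t : S),
      R j1 k = Some t -> R j2 k = Some t -> j1 = j2) /\
  (forall (j1 j2 : 'I_F) (k1 k2 : 'I_K) (t : S),
      (j1, k1) <> (j2, k2) -> R j1 k1 = Some t -> R j2 k2 = Some t ->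
      R j1 k2 = None /\ R j2 k1 = None).

Definition is_min_PDA_symbols (F K Z n : nat) : Prop :=
  (exists R : 'I_F -> 'I_K -> option 'I_n, is_PDA Z R) /\
  (forall (S : finType) (R : 'I_F -> 'I_K -> option S), is_PDA Z R -> n <= #|S|).

(* Main.v *)
Require Import Defs.
From mathcomp Require Import all_boot.
From mathcomp Require Import zify.
From Stdlib Require Import FunctionalExtensionality.
Set Implicit Arguments. Unset Strict Implicit. Unset Printing Implicit Defensive.

Definition L4 {T} (d : T) (a0 a1 a2 a3 : T) (x : 'I_4) : T := nth d [:: a0; a1; a2; a3] x.
Definition o0 : 'I_4 := @Ordinal 4 0 isT.
Definition o1 : 'I_4 := @Ordinal 4 1 isT.
Definition o2 : 'I_4 := @Ordinal 4 2 isT.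
Definition o3 : 'I_4 := @Ordinal 4 3 isT.
Definition E4 := [:: o0; o1; o2; o3].
Definition cnt (b : 'I_4 -> bool) := count b E4.
Definition A4 (b : 'I_4 -> bool) := all b E4.
Definition Eo := None :: map Some E4.
Definition other (f : 'I_4 -> bool) (x : 'I_4) : option 'I_4 :=
  ohead (filter (fun q => (q != x) && f q) E4).
Definition ee (phi : 'I_4 -> option 'I_4) z := (phi z != None) + 3 * cnt (fun r => phi r == Some z).

Lemma colfin : all (fun b0 => all (fun b1 => all (fun b2 => all (fun b3 => let f := L4 false b0 b1 b2 b3 in
  (cnt f == 2) ==> A4 (fun x => f x ==> (other f x != None)) &&
  A4 (fun z => cnt (fun r => f r && (other f r == Some z)) == f z)) [::false;true]) [::false;true]) [::false;true]) [::false;true].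
Proof. vm_compute. reflexivity. Qed.

Lemma symfin : all (fun a0 => all (fun a1 => all (fun a2 => all (fun a3 => let phi := L4 None a0 a1 a2 a3 in
  (A4 (fun x => phi x != Some x) && A4 (fun x => A4 (fun r => A4 (fun y => (phi x == Some r) ==> (phi y != None) ==> (x != y) ==> (r != y))))) ==>
  [&& (cnt (fun x => phi x != None) <= 3),
      (cnt (fun x => phi x != None) == 3) ==> A4 (fun z => ee phi z %% 4 == 1) &
      (cnt (fun x => phi x != None) == 2) ==> has (fun z1 => has (fun z2 => ee phi z1 %% 4 != ee phi z2 %% 4) E4) E4]) Eo) Eo) Eo) Eo.
Proof. vm_compute. reflexivity. Qed.

Lemma mem_E4 (x : 'I_4) : x \in E4.
Proof. by rewrite -(mem_map val_inj); case: x => [[|[|[|[|m]]]] Hm]. Qed.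

Lemma uniq_E4 : uniq E4. Proof. by []. Qed.

Lemma L4E {T} (d : T) (f : 'I_4 -> T) : f = L4 d (f o0) (f o1) (f o2) (f o3).
Proof.
apply: functional_extensionality => x; case: x => [[|[|[|[|m]]]] Hm] //;
  rewrite /L4 /=; congr f; exact: val_inj.
Qed.

Lemma A4P (b : 'I_4 -> bool) : A4 b -> forall x, b x.
Proof. by move/allP => H x; apply: H; apply: mem_E4. Qed.

Lemma sum_cnt (b : 'I_4 -> bool) : \sum_(x < 4) (b x : nat) = cnt b.
Proof.
transitivity (\sum_(x in E4) (b x : nat)).
  by apply: eq_bigl => x; rewrite mem_E4.
rewrite -big_uniq // /cnt -sum1_count [RHS]big_mkcond /=.
by apply: eq_bigr => x _; case: (b x).
Qed.

Lemma mem_Eo (o : option 'I_4) : o \in Eo.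
Proof. by case: o => [x|] //; rewrite /Eo inE map_f ?mem_E4 ?orbT. Qed.

Lemma col_fact (f : 'I_4 -> bool) : cnt f = 2 ->
  (forall x, f x -> other f x != None) /\
  (forall z, cnt (fun r => f r && (other f r == Some z)) = f z).
Proof.
move=> Hc.
have m2 : forall b : bool, b \in [:: false; true] by case.
have := colfin.
move/allP/(_ _ (m2 (f o0)))/allP/(_ _ (m2 (f o1)))/allP/(_ _ (m2 (f o2)))/allP/(_ _ (m2 (f o3))).
rewrite /= -(L4E false f) Hc eqxx /= => /andP[H1 H2]; split.
  by move=> x Hx; move/A4P: H1 => /(_ x); rewrite Hx.
by move=> z; move/A4P: H2 => /(_ z)/eqP.
Qed.

Lemma sym_fact (phi : 'I_4 -> option 'I_4) :
  (forall x, phi x != Some x) ->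
  (forall x r y, phi x = Some r -> phi y != None -> x != y -> r != y) ->
  [/\ cnt (fun x => phi x != None) <= 3,
      (cnt (fun x => phi x != None) = 3 -> forall z, ee phi z %% 4 = 1) &
      (cnt (fun x => phi x != None) = 2 -> exists z1 z2, ee phi z1 %% 4 != ee phi z2 %% 4)].
Proof.
move=> Ha Hb.
have := symfin.
move/allP/(_ _ (mem_Eo (phi o0)))/allP/(_ _ (mem_Eo (phi o1)))/allP/(_ _ (mem_Eo (phi o2)))/allP/(_ _ (mem_Eo (phi o3))).
cbv beta zeta; rewrite -(L4E None phi).
have -> : A4 (fun x => phi x != Some x) by apply/allP => x _; apply: Ha.
have -> : A4 (fun x => A4 (fun r => A4 (fun y => (phi x == Some r) ==> (phi y != None) ==> (x != y) ==> (r != y)))).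
  apply/allP => x _; apply/allP => r _; apply/allP => y _.
  apply/implyP => /eqP Hx; apply/implyP => Hy; apply/implyP => Hxy; exact: Hb Hx Hy Hxy.
move/implyP => /(_ isT) /and3P[H1 H2 H3]; split => //.
  by move=> Hc z; move: H2; rewrite Hc eqxx /= => /A4P /(_ z)/eqP.
move=> Hc; move: H3; rewrite Hc eqxx implyTb => H3.
have [z1 _ H4] := hasP H3.
have [z2 _ H] := hasP H4.
by exists z1, z2.
Qed.

Definition fc K (S : finType) (R : 'I_4 -> 'I_K -> option S) (k : 'I_K) : 'I_4 -> bool :=
  fun j => R j k != None.
Definition phi K (S : finType) (R : 'I_4 -> 'I_K -> option S) (t : S) (x : 'I_4) : option 'I_4 :=
  if [pick k | R x k == Some t] is Some k then other (fc R k) x else None.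

Lemma other_some (f : 'I_4 -> bool) x r : other f x = Some r -> (r != x) && f r.
Proof.
rewrite /other; case E: (filter _ E4) => [|a l] //= [<-].
have : a \in filter (fun q => (q != x) && f q) E4 by rewrite E inE eqxx.
by rewrite mem_filter => /andP[].
Qed.

Lemma sum_card4 (P : pred 'I_4) : \sum_(j < 4) (P j : nat) = #|P|.
Proof. rewrite -sum1_card [RHS]big_mkcond; apply: eq_bigr => j _; rewrite unfold_in; by case: (P j). Qed.

Lemma col2 K (S : finType) (R : 'I_4 -> 'I_K -> option S) :
  is_PDA 2 R -> forall k, cnt (fc R k) = 2.
Proof.
move=> [Hcol _] k.
rewrite -sum_cnt.
have H1 : \sum_(j < 4) (R j k == None : nat) = 2.
  rewrite sum_card4; etransitivity; last exact: (Hcol k).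
  by apply: eq_card => j; rewrite inE.
have H2 : \sum_(j < 4) (fc R k j : nat) + \sum_(j < 4) (R j k == None : nat) = 4.
  rewrite -big_split /=.
  rewrite (eq_bigr (fun _ => 1)); first by rewrite sum1_card card_ord.
  by move=> j _; rewrite /fc; case: (R j k).
lia.
Qed.

Lemma pick_sum K (S : finType) (R : 'I_4 -> 'I_K -> option S) (g : 'I_K -> nat) x t :
  is_PDA 2 R ->
  (if [pick k | R x k == Some t] is Some k then g k else 0) = \sum_k (R x k == Some t) * g k.
Proof.
move=> [_ [Hrow _]].
case: pickP => [k Hk | Hn].
  rewrite (bigD1 k) //= Hk mul1n big1 ?addn0 // => k' Hk'.
  case E: (R x k' == Some t); last by rewrite mul0n.
  move/eqP: E => E; move/eqP: Hk => Hk.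
  by move: Hk'; rewrite (Hrow _ _ _ _ E Hk) eqxx.
by rewrite big1 // => k _; rewrite Hn.
Qed.

Lemma sum_eqSome (S : finType) (o : option S) : \sum_t ((o == Some t) : nat) = (o != None).
Proof.
case: o => [u|] /=.
  rewrite (bigD1 u) //= eqxx big1 // => t Ht.
  by case: eqP => // -[E]; move: Ht; rewrite E eqxx.
by rewrite big1.
Qed.

Lemma rho_sum K (S : finType) (R : 'I_4 -> 'I_K -> option S) t x :
  is_PDA 2 R -> (phi R t x != None : nat) = \sum_k (R x k == Some t).
Proof.
move=> H.
have -> : (phi R t x != None : nat) =
   (if [pick k | R x k == Some t] is Some k then ((other (fc R k) x != None) : nat) else 0).
  by rewrite /phi; case: [pick k | _].
rewrite (pick_sum _ _ _ H); apply: eq_bigr => k _.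
case E: (R x k == Some t); rewrite ?mul0n //= mul1n.
have [Hf _] := col_fact (col2 H k).
by rewrite Hf // /fc (eqP E).
Qed.

Lemma gamma_sum K (S : finType) (R : 'I_4 -> 'I_K -> option S) t r z :
  is_PDA 2 R -> (phi R t r == Some z : nat) = \sum_k (R r k == Some t) * (other (fc R k) r == Some z).
Proof.
move=> H.
have -> : (phi R t r == Some z : nat) =
   (if [pick k | R r k == Some t] is Some k then ((other (fc R k) r == Some z) : nat) else 0).
  by rewrite /phi; case: [pick k | _].
exact: pick_sum.
Qed.

Lemma C1 K (S : finType) (R : 'I_4 -> 'I_K -> option S) x :
  is_PDA 2 R -> \sum_t (phi R t x != None : nat) = \sum_k (R x k != None : nat).
Proof.
move=> H.
rewrite (eq_bigr _ (fun t _ => rho_sum t x H)) exchange_big /=.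
by apply: eq_bigr => k _; rewrite sum_eqSome.
Qed.

Lemma C2 K (S : finType) (R : 'I_4 -> 'I_K -> option S) z :
  is_PDA 2 R -> \sum_t cnt (fun r => phi R t r == Some z) = \sum_k (R z k != None : nat).
Proof.
move=> H.
rewrite (eq_bigr _ (fun t _ => esym (sum_cnt _))) exchange_big /=.
rewrite (eq_bigr (fun r => \sum_k (fc R k r : nat) * (other (fc R k) r == Some z))); last first.
  move=> r _; rewrite (eq_bigr _ (fun t _ => gamma_sum t r z H)) exchange_big /=.
  apply: eq_bigr => k _; rewrite -big_distrl /= sum_eqSome //.
rewrite exchange_big /=; apply: eq_bigr => k _.
have [_ Hg] := col_fact (col2 H k).
rewrite -(Hg z) -sum_cnt; apply: eq_bigr => r _.
by case: (fc R k r); rewrite ?mul1n ?mul0n.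
Qed.

Lemma phi_a K (S : finType) (R : 'I_4 -> 'I_K -> option S) t x : phi R t x != Some x.
Proof.
rewrite /phi; case: [pick k | _] => [k|] //.
by apply/eqP => /other_some; rewrite eqxx.
Qed.

Lemma phi_b K (S : finType) (R : 'I_4 -> 'I_K -> option S) t :
  is_PDA 2 R -> forall x r y, phi R t x = Some r -> phi R t y != None -> x != y -> r != y.
Proof.
move=> [_ [_ [_ Hcross]]] x r y.
rewrite /phi; case: pickP => [k1 /eqP Hk1|_] //.
move=> /other_some /andP[_ Hr].
case: pickP => [k2 /eqP Hk2|_] // _ Hxy.
apply/eqP => Ery; subst r.
have Hne : (x, k1) <> (y, k2) by case=> Exy; move: Hxy; rewrite Exy eqxx.
have [_ Hn] := Hcross _ _ _ _ _ Hne Hk1 Hk2.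
by move: Hr; rewrite /fc Hn.
Qed.

Definition fK (K : nat) := if (K %% 6 == 0) || (K %% 6 == 2) || (K %% 6 == 5)
     then (2 * K + 2) %/ 3
     else (2 * K + 2) %/ 3 + 1.

Lemma arith K N D : 3 * N = 2 * K + D -> (D = 0 -> N %% 4 = 0) -> D <> 1 -> fK K <= N.
Proof.
move=> H1 H2 H3; rewrite /fK.
have : K %% 6 < 6 by rewrite ltn_pmod.
move Er: (K %% 6) => r.
case: r Er => [|[|[|[|[|[|r]]]]]] Er //= _.
all: case: D H1 H2 H3 => [|[|D]] H1 H2 H3; try lia.
all: have := H2 erefl; lia.
Qed.

Lemma lower K (S : finType) (R : 'I_4 -> 'I_K -> option S) : is_PDA 2 R -> fK K <= #|S|.
Proof.
move=> H.
pose m t := cnt (fun x => phi R t x != None).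
have SF t := sym_fact (@phi_a _ _ R t) (@phi_b _ _ R t H).
have Mle t : m t <= 3 by have [] := SF t.
have M3 t : m t = 3 -> forall z, ee (phi R t) z %% 4 = 1 by have [] := SF t.
have M2 t : m t = 2 -> exists z1 z2, ee (phi R t) z1 %% 4 != ee (phi R t) z2 %% 4 by have [] := SF t.
have M1 : \sum_t m t = 2 * K.
  rewrite /m (eq_bigr _ (fun t _ => esym (sum_cnt _))) exchange_big /=.
  rewrite (eq_bigr _ (fun x _ => C1 x H)) exchange_big /=.
  rewrite (eq_bigr (fun _ => 2)) ?sum_nat_const ?card_ord; first lia.
  by move=> k _; rewrite sum_cnt; exact: (col2 H k).
have M5 z : (\sum_t ee (phi R t) z) %% 4 = 0.
  have E1 : \sum_t ee (phi R t) z = \sum_t (phi R t z != None : nat) +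
       3 * \sum_t cnt (fun r => phi R t r == Some z).
    by rewrite /ee big_split /= big_distrr.
  rewrite E1 C1 // C2 //; lia.
have HD : 3 * #|S| = 2 * K + \sum_t (3 - m t).
  rewrite -M1 -big_split /= (eq_bigr (fun _ => 3)) ?sum_nat_const; first by rewrite mulnC.
  by move=> t _; have := Mle t; lia.
have le_term (F : S -> nat) (P : pred S) t : P t -> F t <= \sum_(i | P i) F i.
  by move=> Pt; rewrite (bigD1 t) //= leq_addr.
apply: (arith HD).
  move=> HD0.
  have Hall t : m t = 3.
    have := @le_term (fun t => 3 - m t) predT t isT; rewrite HD0; have := Mle t; lia.
  have := M5 o0; rewrite -modn_summ (eq_bigr (fun _ => 1)) ?sum_nat_const ?muln1 //.
  by move=> t _; apply: M3.
move=> HD1.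
case: (boolP [exists t, m t != 3]) => [/existsP [t0 Ht0] | /existsPn Hall]; last first.
  move: HD1; rewrite big1 // => t _.
  by have := Hall t; rewrite negbK => /eqP ->.
rewrite (bigD1 t0) //= in HD1.
have Hm2 : m t0 = 2.
  have := Mle t0; move: Ht0 HD1; lia.
have Hrest t : t != t0 -> m t = 3.
  move=> Ht; have := @le_term (fun t => 3 - m t) (fun i => i != t0) t Ht.
  have := Mle t; move: HD1; lia.
have [z1 [z2 Hz]] := M2 t0 Hm2.
have Key z : (ee (phi R t0) z + \sum_(t | t != t0) 1) %% 4 = 0.
  have := M5 z; rewrite (bigD1 t0) //= => Hz'.
  have HX : (\sum_(t | t != t0) ee (phi R t) z) %% 4 = (\sum_(t | t != t0) 1) %% 4.
    rewrite -modn_summ; congr (_ %% 4); apply: eq_bigr => t Ht.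
    by apply: M3; apply: Hrest.
  move: Hz' HX; lia.
have K1 := Key z1; have K2 := Key z2.
move: Hz K1 K2; lia.
Qed.

Fixpoint ordl (K : nat) : seq 'I_K :=
  match K with 0 => [::] | K'.+1 => ord0 :: map (lift ord0) (ordl K') end.

Lemma mem_ordl K (x : 'I_K) : x \in ordl K.
Proof.
elim: K x => [|K IH] x; first by case: x.
rewrite /= inE; case: (unliftP ord0 x) => [j ->|->]; last by rewrite eqxx.
by rewrite map_f ?orbT.
Qed.

Definition AK K (P : 'I_K -> bool) := all P (ordl K).
Lemma AKP K (P : 'I_K -> bool) : AK P -> forall x, P x.
Proof. by move/allP => H x; apply: H; apply: mem_ordl. Qed.

Definition is_PDAb K n (R : 'I_4 -> 'I_K -> option 'I_n) : bool :=
  [&& AK (fun k => cnt (fun j => R j k == None) == 2),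
      A4 (fun j => AK (fun k1 => AK (fun k2 => AK (fun t =>
          (R j k1 == Some t) ==> (R j k2 == Some t) ==> (k1 == k2))))),
      A4 (fun j1 => A4 (fun j2 => AK (fun k => AK (fun t =>
          (R j1 k == Some t) ==> (R j2 k == Some t) ==> (j1 == j2))))) &
      A4 (fun j1 => A4 (fun j2 => AK (fun k1 => AK (fun k2 => AK (fun t =>
          ((j1 != j2) || (k1 != k2)) ==> (R j1 k1 == Some t) ==> (R j2 k2 == Some t) ==>
          (R j1 k2 == None) && (R j2 k1 == None))))))].

Lemma is_PDAbP K n (R : 'I_4 -> 'I_K -> option 'I_n) : is_PDAb R -> is_PDA 2 R.
Proof.
case/and4P => H1 H2 H3 H4; split; [|split; [|split]].
- move=> k; have /eqP := AKP H1 k; rewrite -sum_cnt sum_card4 => E.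
  by etransitivity; last exact: E; apply: eq_card => j; rewrite inE.
- move=> j k1 k2 t /eqP E1 /eqP E2.
  by have := AKP (AKP (AKP (A4P H2 j) k1) k2) t; rewrite /= E1 E2 /= => /eqP.
- move=> j1 j2 k t /eqP E1 /eqP E2.
  by have := AKP (AKP (A4P (A4P H3 j1) j2) k) t; rewrite /= E1 E2 /= => /eqP.
- move=> j1 j2 k1 k2 t Hne /eqP E1 /eqP E2.
  have := AKP (AKP (AKP (A4P (A4P H4 j1) j2) k1) k2) t; rewrite /= E1 E2 /=.
  have -> : (j1 != j2) || (k1 != k2).
    case: eqP => [Ej|] //=; case: eqP => [Ek|] //=; by case: Hne; rewrite Ej Ek.
  by move=> /andP[/eqP -> /eqP ->].
Qed.

Definition code n (c : nat) : option 'I_n :=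
  if c is c'.+1 then nth None (map Some (ordl n)) c' else None.
Definition tabR K n (tab : seq (seq nat)) : 'I_4 -> 'I_K -> option 'I_n :=
  fun j k => code n (nth 0 (nth [::] tab j) k).

Definition PDAex (K n : nat) := exists S : finType, #|S| = n /\
  exists R : 'I_4 -> 'I_K -> option S, is_PDA 2 R.

Lemma base_ex K n tab : is_PDAb (@tabR K n tab) -> PDAex K n.
Proof. move=> H; exists 'I_n; split; first exact: card_ord. by exists (@tabR K n tab); apply: is_PDAbP. Qed.

Lemma base0 : PDAex 0 0. Proof. apply: (@base_ex 0 0 [::]); vm_compute; reflexivity. Qed.
Lemma base1 : PDAex 1 2. Proof. apply: (@base_ex 1 2 [:: [::1]; [::2]; [::0]; [::0]]); vm_compute; reflexivity. Qed.
Lemma base2 : PDAex 2 2. Proof. apply: (@base_ex 2 2 [:: [::1;0]; [::2;0]; [::0;1]; [::0;2]]); vm_compute; reflexivity. Qed.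
Lemma base3 : PDAex 3 3. Proof. apply: (@base_ex 3 3 [:: [::1;0;3]; [::2;0;0]; [::0;1;2]; [::0;3;0]]); vm_compute; reflexivity. Qed.
Lemma base4 : PDAex 4 4. Proof. apply: (@base_ex 4 4 [:: [::1;0;3;0]; [::2;0;4;0]; [::0;1;0;3]; [::0;2;0;4]]); vm_compute; reflexivity. Qed.
Lemma base5 : PDAex 5 4. Proof. apply: (@base_ex 5 4 [:: [::2;3;4;0;0]; [::1;0;0;4;3]; [::0;1;0;2;0]; [::0;0;1;0;2]]); vm_compute; reflexivity. Qed.
Lemma base6 : PDAex 6 4. Proof. apply: (@base_ex 6 4 [:: [::2;3;4;0;0;0]; [::1;0;0;3;4;0]; [::0;1;0;2;0;4]; [::0;0;1;0;2;3]]); vm_compute; reflexivity. Qed.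

Lemma map_PDA K (S S' : finType) (f : S -> S') (R : 'I_4 -> 'I_K -> option S) :
  injective f -> is_PDA 2 R -> is_PDA 2 (fun j k => omap f (R j k)).
Proof.
move=> finj [H1 [H2 [H3 H4]]].
have E0 o : (omap f o == None) = (o == None) by case: o.
have ES o t' : omap f o = Some t' -> exists t, o = Some t /\ t' = f t.
  by case: o => //= t [<-]; exists t.
split; [|split; [|split]].
- move=> k; etransitivity; last exact: (H1 k).
  by apply: eq_card => j; rewrite !inE E0.
- move=> j k1 k2 t' /ES [t1 [E1 ->]] /ES [t2 [E2 /finj Et]]; subst t2.
  exact: H2 E1 E2.
- move=> j1 j2 k t' /ES [t1 [E1 ->]] /ES [t2 [E2 /finj Et]]; subst t2.
  exact: H3 E1 E2.
- move=> j1 j2 k1 k2 t' Hne /ES [t1 [E1 ->]] /ES [t2 [E2 /finj Et]]; subst t2.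
  by have [A B] := H4 _ _ _ _ _ Hne E1 E2; rewrite /= A B.
Qed.

Lemma toOrd K n : PDAex K n -> exists R : 'I_4 -> 'I_K -> option 'I_n, is_PDA 2 R.
Proof.
move=> [S [HS [R HR]]]; subst n.
exists (fun j k => omap enum_rank (R j k)); apply: map_PDA HR; exact: enum_rank_inj.
Qed.

Definition uR K1 K2 (S1 S2 : finType) (R1 : 'I_4 -> 'I_K1 -> option S1) (R2 : 'I_4 -> 'I_K2 -> option S2)
  : 'I_4 -> 'I_(K1 + K2) -> option (S1 + S2)%type :=
  fun j k => match split k with inl a => omap inl (R1 j a) | inr b => omap inr (R2 j b) end.

Lemma union_PDA K1 K2 (S1 S2 : finType) (R1 : 'I_4 -> 'I_K1 -> option S1) (R2 : 'I_4 -> 'I_K2 -> option S2) :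
  is_PDA 2 R1 -> is_PDA 2 R2 -> is_PDA 2 (uR R1 R2).
Proof.
move=> [A1 [B1 [C1 D1]]] [A2 [B2 [C2 D2]]].
have Hk : forall k : 'I_(K1+K2), exists u, k = unsplit u.
  by move=> k; exists (split k); rewrite splitK.
split; [|split; [|split]].
- move=> k; have [u ->] := Hk k; rewrite /uR unsplitK.
  case: u => a; [etransitivity; last exact: (A1 a) | etransitivity; last exact: (A2 a)];
  by apply: eq_card => j; rewrite !inE; case: (_ j a).
- move=> j k1 k2 t; have [u1 ->] := Hk k1; have [u2 ->] := Hk k2; rewrite /uR !unsplitK.
  case: u1 => a1; case: u2 => a2;
  case E1: (_ j a1) => [s1|] //=; case E2: (_ j a2) => [s2|] //= <- //; case=> Es; subst s2.
  + by rewrite (B1 _ _ _ _ E1 E2).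
  + by rewrite (B2 _ _ _ _ E1 E2).
- move=> j1 j2 k t; have [u ->] := Hk k; rewrite /uR !unsplitK.
  case: u => a;
  case E1: (_ j1 a) => [s1|] //=; case E2: (_ j2 a) => [s2|] //= <- //; case=> Es; subst s2.
  + exact: (C1 _ _ _ _ E1 E2).
  + exact: (C2 _ _ _ _ E1 E2).
- move=> j1 j2 k1 k2 t Hne; move: Hne.
  have [u1 ->] := Hk k1; have [u2 ->] := Hk k2; rewrite /uR !unsplitK => Hne.
  case: u1 Hne => a1; case: u2 => a2 Hne;
  case E1: (_ j1 a1) => [s1|] //=; case E2: (_ j2 a2) => [s2|] //= <- //; case=> Es; subst s2.
  + have Hne' : (j1, a1) <> (j2, a2) by case=> Ej Ea; apply: Hne; rewrite Ej Ea.
    by have [-> ->] := D1 _ _ _ _ _ Hne' E1 E2.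
  + have Hne' : (j1, a1) <> (j2, a2) by case=> Ej Ea; apply: Hne; rewrite Ej Ea.
    by have [-> ->] := D2 _ _ _ _ _ Hne' E1 E2.
Qed.


Lemma unionEx K1 K2 n1 n2 : PDAex K1 n1 -> PDAex K2 n2 -> PDAex (K1 + K2) (n1 + n2).
Proof.
move=> [S1 [H1 [R1 P1]]] [S2 [H2 [R2 P2]]].
exists (S1 + S2)%type; split; first by rewrite card_sum H1 H2.
by exists (uR R1 R2); apply: union_PDA.
Qed.

Definition gr (r : nat) := nth 0 [:: 0; 2; 2; 3; 4; 4] r.

Lemma upper s r : r < 6 -> PDAex (s * 6 + r) (s * 4 + gr r).
Proof.
move=> Hr; elim: s => [|s IH].
  by case: r Hr => [|[|[|[|[|[|r]]]]]] //= _;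
    [exact: base0 | exact: base1 | exact: base2 | exact: base3 | exact: base4 | exact: base5].
have -> : s.+1 * 6 + r = (s * 6 + r) + 6 by lia.
have -> : s.+1 * 4 + gr r = (s * 4 + gr r) + 4 by lia.
exact: unionEx IH base6.
Qed.

Theorem mainTheorem14 (K : nat) : 1 <= K ->
  is_min_PDA_symbols 4 K 2
    (if (K %% 6 == 0) || (K %% 6 == 2) || (K %% 6 == 5)
     then (2 * K + 2) %/ 3
     else (2 * K + 2) %/ 3 + 1).
Proof.
move=> HK; change (is_min_PDA_symbols 4 K 2 (fK K)); split.
  have E : fK K = K %/ 6 * 4 + gr (K %% 6).
    rewrite /fK /gr.
    have : K %% 6 < 6 by rewrite ltn_pmod.
    have HD := divn_eq K 6.
    move Er: (K %% 6) => r.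
    case: r Er => [|[|[|[|[|[|r]]]]]] Er //= _; lia.
  rewrite E; apply: toOrd.
  have := upper (K %/ 6) (ltn_pmod K (isT : 0 < 6)).
  by rewrite -divn_eq.
move=> S R H; exact: lower H.
Qed.
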